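(* Let $(\mathcal{X},d_\mathcal{X})$, $(\mathcal{Y}_k,d_{\mathcal{Y}_k})$, $k=1,\dots,K$, be compact metric spaces, $c_k:\mathcal{X}\times\mathcal{Y}_k\to\mathbb{R}_+$ continuous, and assume that for every $Y=(y_1,\dots,y_K)\in\mathcal{Y}:=\mathcal{Y}_1\times\cdots\times\mathcal{Y}_K$ the problem $\min_{x\in\mathcal{X}}C(x,Y)$, with $C(x,Y):=\sum_{k=1}^K c_k(x,y_k)$, has a unique minimiser $B(Y)$. Assume moreover that there exist $x\in\mathcal{X}$ and $Y\in\mathcal{Y}$ with $x\neq B(Y)$, and let $R:=\max_{(x,Y)\in\mathcal{X}\times\mathcal{Y}} d_\mathcal{X}(x,B(Y))$. Then there exists a function $\delta=\eta\circ d_\mathcal{X}$, where $\eta:[0,R]\to\mathbb{R}_+$ is lower semi-continuous, non-decreasing and satisfies $\eta(s)=0\iff s=0$, such that $$\forall (x,Y)\in\mathcal{X}\times\mathcal{Y},\quad C(x,Y)\ge C(B(Y),Y)+\delta(x,B(Y)).$$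
   Context: $\mathcal{Y}$ is equipped with the product distance; $B$ is continuous so $R$ is finite and positive under the stated assumptions. *)

(* Defs.v *)
From HB Require Import structures.
From mathcomp Require Import all_boot all_order all_algebra.
From mathcomp Require Import all_classical all_reals all_analysis.
Set Implicit Arguments. Unset Strict Implicit. Unset Printing Implicit Defensive.
Import Order.TTheory GRing.Theory Num.Theory.
Import numFieldNormedType.Exports.
Local Open Scope classical_set_scope.
Local Open Scope ring_scope.

Definition lsc_on (R : realType) (D : set R) (eta : R -> R) : Prop :=
  forall s, D s -> forall a, a < eta s ->
    exists2 e : R, 0 < e & forall t, D t -> `|t - s| < e -> a < eta t.

Definition totcost (R : realType) (X : Type) (K : nat) (Yk : 'I_K -> Type)
  (c : forall k : 'I_K, X -> Yk k -> R) (x : X) (Y : forall k, Yk k) : R :=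
  \sum_(k < K) c k x (Y k).

(* Main.v *)
Set Warnings "-all".
Require Import Defs.
From HB Require Import structures.
From mathcomp Require Import all_boot all_order all_algebra.
From mathcomp Require Import all_classical all_reals all_analysis.
From mathcomp Require Import lra.
Import Order.TTheory GRing.Theory Num.Theory.
Import numFieldNormedType.Exports.
Local Open Scope classical_set_scope.
Local Open Scope ring_scope.

Section Key.
Context (R : realType) (X : metricType R) (K : nat) (Yk : 'I_K -> metricType R)
  (c : forall k : 'I_K, X -> Yk k -> R) (B : (forall k : 'I_K, Yk k) -> X).
Hypotheses (cX : compact [set: X]) (cY : forall k, compact [set: Yk k])
  (cc : forall k, continuous (fun p : X * Yk k => c k p.1 p.2))
  (Bmin : forall Y x, totcost c (B Y) Y <= totcost c x Y)
  (Buniq : forall Y x, (forall x', totcost c x Y <= totcost c x' Y) -> x = B Y).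

Local Import function_spaces.ArrowAsProduct.
Local Notation PY := (forall k : 'I_K, (Yk k : topologicalType)).


Lemma CC_cont : continuous (fun q : X * PY => totcost c q.1 q.2).
Proof.
rewrite /totcost; apply: continuous_big; first exact: add_continuous.
move=> k _ q.
apply: (@continuous_comp _ _ _ (fun q : X * PY => (q.1, q.2 k)) (fun p : X * Yk k => c k p.1 p.2)); last exact: cc.
apply: cvg_pair; first exact: cvg_fst.
apply: (@cvg_comp _ _ _ snd (fun f : PY => f k) _ _ _ cvg_snd).
exact: proj_continuous.
Qed.

Lemma CC_comp (T : topologicalType) (f : T -> X) (g : T -> PY) :
  continuous f -> continuous g -> continuous (fun z => totcost c (f z) (g z)).
Proof.
move=> cf cg z.
apply: (@continuous_comp _ _ _ (fun z => (f z, g z)) (fun q : X * PY => totcost c q.1 q.2)); last exact: CC_cont.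
exact: (@cvg_pair _ _ _ _ _ _ _ _ _ f g (cf z) (cg z)).
Qed.


Local Notation Z := ((X * PY) * X)%type.

Lemma key t : 0 < t -> exists2 m, 0 < m & forall x Y, t <= mdist x (B Y) ->
  m <= totcost c x Y - totcost c (B Y) Y.
Proof.
move=> t0; apply: contrapT => Hn.
have H m : 0 < m -> exists x Y, t <= mdist x (B Y) /\
    totcost c x Y - totcost c (B Y) Y < m.
  move=> m0; apply: contrapT => Hm; apply: Hn; exists m => // x Y dxy.
  rewrite leNgt; apply/negP => lt; apply: Hm; by exists x, Y.
pose E (m : R) : set Z := [set z | z.2 = B z.1.2 /\ t <= mdist z.1.1 z.2 /\
   totcost c z.1.1 z.1.2 - totcost c z.2 z.1.2 < m].
pose F := filter_from [set m : R | 0 < m] E.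
have FF : ProperFilter F.
  apply: filter_from_proper.
    apply: filter_from_filter; first by exists 1%R; rewrite /= ltr01.
    move=> i j i0 j0; exists (Num.min i j); first by rewrite /= lt_min; apply/andP; split.
    move=> z [h1 [h2 h3]]; split; (split; [done|split; [done|]]);
      apply: (lt_le_trans h3); rewrite ge_min lexx ?orbT //.
  move=> m m0; have [x [Y [h1 h2]]] := H m m0; by exists ((x, Y : PY), B Y).
have cZ : compact [set: Z].
  rewrite -setXTT; apply: compact_setX => //; rewrite -setXTT; apply: compact_setX => //.
  have -> : [set: PY] = [set f : PY | forall i, [set: Yk i] (f i)] by apply/seteqP; split.
  have := @tychonoff _ (fun k : 'I_K => (Yk k : topologicalType)) (fun k => [set: Yk k]) cY. exact.
have [p [_ cp]] := cZ F FF filterT.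
have FE m : 0 < m -> F (E m) by move=> m0; exists m.
have clusterle (phi : Z -> R) : continuous phi ->
    (forall m, 0 < m -> forall z, E m z -> phi z <= m) -> phi p <= 0.
  move=> cphi hphi; rewrite leNgt; apply/negP => pos.
  have nb : nbhs p (phi @^-1` [set r | phi p / 2 < r]).
    apply: cphi; apply: open_nbhs_nbhs; split; first exact: open_gt.
    rewrite /=; lra.
  have h2 : 0 < phi p / 2 by rewrite divr_gt0.
  have [z [Ez hz]] := cp _ _ (FE _ h2) nb.
  have := hphi _ h2 z Ez; rewrite /= in hz => h3.
  by move: (lt_le_trans hz h3); rewrite ltxx.
case: p cp clusterle => [[x Y] b] cp clusterle.
have claimA : t <= mdist x b.
  rewrite leNgt; apply/negP => lt.
  pose r := (t - mdist x b) / 2.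
  have r0 : 0 < r by rewrite /r; lra.
  have nb : nbhs ((x, Y), b) [set z : Z | mdist x z.1.1 < r /\ mdist b z.2 < r].
    exists ((ball x r `*` setT), ball b r); first split.
    - rewrite /=; exists (ball x r, setT); first split.
      + exact: nbhsx_ballx.
      + exact: filterT.
      done.
    - exact: nbhsx_ballx.
    move=> [[z1 z2] z3] /= [[h1 _] h3]; rewrite !ballEmdist in h1 h3; by split.
  have [z [[_ [Ez _]] [h1 h2]]] := cp _ _ (FE 1 ltr01) nb.
  have := metric_triangle z.1.1 x z.2.
  have := metric_triangle x b z.2.
  rewrite (metric_sym z.1.1 x); rewrite /r in h1 h2; lra.
have fstc : continuous (fun z : Z => z.1.1).
  move=> z; exact: (cvg_comp _ _ cvg_fst cvg_fst).
have sndc : continuous (fun z : Z => z.2).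
  move=> z; exact: cvg_snd.
have mdc : continuous (fun z : Z => z.1.2).
  move=> z; exact: (cvg_comp _ _ cvg_fst cvg_snd).
have claimB w : totcost c b Y <= totcost c w Y.
  have := clusterle (fun z => totcost c z.2 z.1.2 - totcost c w z.1.2).
  have wc : continuous (fun _ : Z => w) by move=> ?; exact: cvg_cst.
  rewrite /= subr_le0; apply.
    move=> z; apply: cvgB; first by move: (@CC_comp _ _ _ sndc mdc z).
    by move: (@CC_comp _ _ _ wc mdc z).
  move=> m m0 z [Ez _]; rewrite Ez; apply: (le_trans _ (ltW m0)).
  by rewrite subr_le0 Bmin.
have bB : b = B Y := @Buniq Y b claimB.
have claimC : totcost c x Y <= totcost c b Y.
  have := clusterle (fun z => totcost c z.1.1 z.1.2 - totcost c z.2 z.1.2).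
  rewrite /= subr_le0; apply.
    move=> z; apply: cvgB; first by move: (@CC_comp _ _ _ fstc mdc z).
    by move: (@CC_comp _ _ _ sndc mdc z).
  by move=> m m0 z [_ [_ h]]; apply: ltW.
have xB : x = B Y.
  apply: Buniq => w; exact: le_trans claimC (claimB w).
move: claimA; rewrite xB -bB mdistxx; lra.
Qed.

End Key.

Theorem lemma5 (R : realType) (X : metricType R) (K : nat)
  (Yk : 'I_K -> metricType R)
  (c : forall k : 'I_K, X -> Yk k -> R)
  (B : (forall k : 'I_K, Yk k) -> X) :
  compact [set: X] ->
  (forall k, compact [set: Yk k]) ->
  (forall k x y, 0 <= c k x y) ->
  (forall k, continuous (fun p : X * Yk k => c k p.1 p.2)) ->
  (* B Y is the unique minimiser of C(., Y) *)
  (forall Y x, totcost c (B Y) Y <= totcost c x Y) ->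
  (forall Y x, (forall x', totcost c x Y <= totcost c x' Y) -> x = B Y) ->
  (exists x Y, x <> B Y) ->
  let Rm := sup [set mdist x (B Y) | x in [set: X] & Y in [set: forall k, Yk k]] in
  exists eta : R -> R,
    [/\ lsc_on `[0, Rm] eta,
        {in `[0, Rm] &, {homo eta : s t / s <= t}},
        (forall s, s \in `[0, Rm] -> 0 <= eta s),
        (forall s, s \in `[0, Rm] -> (eta s = 0 <-> s = 0)) &
        (forall x Y, totcost c (B Y) Y + eta (mdist x (B Y)) <= totcost c x Y)].
Proof.
move=> cX cY c0 cc Bmin Buniq _ Rm.
pose gap x Y := totcost c x Y - totcost c (B Y) Y.
have gap0 x Y : 0 <= gap x Y by rewrite /gap subr_ge0.
pose G (t m : R) := forall x Y, t <= mdist x (B Y) -> m <= gap x Y.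
pose A (s : R) := [set m : R | 0 <= m /\ m <= 1 /\ exists2 t, (0 < t) && (t < s) & G t m].
pose eta (s : R) := if 0 < s then sup (A s) else 0.
have A0 s : 0 < s -> A s 0.
  move=> s0; split; first exact: lexx.
  split; first exact: ler01.
  exists (s / 2); last by move=> x Y _; exact: gap0.
  apply/andP; split; first by rewrite divr_gt0.
  by rewrite ltr_pdivrMr // ltr_pMr // ltr1n.
have Asup s : 0 < s -> has_sup (A s).
  move=> s0; split; first by exists 0; exact: A0.
  by exists 1 => m [_ [h _]].
have Amono s t : s <= t -> A s `<=` A t.
  move=> st m [h1 [h2 [u /andP [u0 us] Gu]]]; split => //; split => //.
  exists u => //; apply/andP; split => //; exact: lt_le_trans us st.
have eta_ge0 s : 0 <= eta s.
  rewrite /eta; case: ifPn => s0 //.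
  exact: (ub_le_sup (Asup s s0).2 (A0 s s0)).
have eta_lb s m : 0 < s -> A s m -> m <= eta s.
  move=> s0 Am; rewrite /eta s0; exact: (ub_le_sup (Asup s s0).2 Am).
have eta_mono s t : s <= t -> eta s <= eta t.
  move=> st; rewrite {1}/eta; case: ifPn => s0 //.
  have t0 : 0 < t by exact: lt_le_trans s0 st.
  rewrite /eta t0; apply: sup_le; last exact: Asup.
    by move=> m /(Amono _ _ st) Am; exists m.
  by exists 0; exact: A0.
have eta_pos s : 0 < s -> 0 < eta s.
  move=> s0; have s20 : 0 < s / 2 by rewrite divr_gt0.
  have [m m0 Gm] := @key R X K Yk c B cX cY cc Bmin Buniq (s / 2) s20.
  have hA : A s (Num.min m 1).
    split; first by rewrite le_min ltW // ler01.
    split; first by rewrite ge_min lexx orbT.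
    exists (s / 2); first by apply/andP; split => //; rewrite ltr_pdivrMr // ltr_pMr // ltr1n.
    move=> x Y h; apply: le_trans (Gm x Y h); rewrite ge_min lexx //.
  apply: lt_le_trans (eta_lb _ _ s0 hA).
  by rewrite lt_min m0 ltr01.
exists eta; split.
- move=> s _ a.
  rewrite {1}/eta; case: ifPn => s0 ha; last first.
    exists 1 => // t _ _; exact: lt_le_trans ha (eta_ge0 t).
  have [m Am am] := sup_gt (ex_intro _ 0 (A0 s s0)) ha.
  case: (Am) => _ [_ [t0 /andP [t00 t0s] Gt0]].
  exists (s - t0); first by rewrite subr_gt0.
  move=> t _; rewrite ltr_norml => /andP [h1 h2].
  have tt0 : t0 < t by lra.
  have t0' : 0 < t by exact: lt_trans t00 tt0.
  apply: lt_le_trans am (eta_lb _ _ t0' _).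
  split; first by case: Am.
  split; first by case: Am => _ [].
  by exists t0 => //; apply/andP.
- move=> s t _ _; exact: eta_mono.
- move=> s _; exact: eta_ge0.
- move=> s; rewrite in_itv /= => /andP [s0 _]; split.
    move=> e0; apply/eqP; rewrite eq_le s0 andbT leNgt; apply/negP => sp.
    by have := eta_pos s sp; rewrite e0 ltxx.
  by move=> ->; rewrite /eta ltxx.
- move=> x Y.
  suff h : eta (mdist x (B Y)) <= gap x Y by move: h; rewrite /gap; lra.
  rewrite /eta; case: ifPn => d0; last exact: gap0.
  apply: ge_sup; first by exists 0; exact: A0.
  move=> m [_ [_ [t /andP [_ td] Gt]]]; apply: Gt; exact: ltW.
Qed.
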